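(* Let $U$ be a finite set, $\alpha>1$ and $\delta\in[0,1)$. For probability distributions $P,Q$ on $U$, $e^{(\alpha-1)D^\delta_\alpha(P\|Q)}$ equals the optimal value of the program $$\min_{P',Q'} \sum_x P'(x)^\alpha Q'(x)^{1-\alpha}\quad\text{s.t.}\quad \sum_x P'(x)=\sum_x Q'(x)=1,\ 0\le P'(x)\le \tfrac{P(x)}{1-\delta},\ 0\le Q'(x)\le\tfrac{Q(x)}{1-\delta}\ \ \forall x,$$ the objective is jointly convex in $(P,Q,P',Q')$ over a convex feasible set, and consequently $(P,Q)\mapsto e^{(\alpha-1)D^\delta_\alpha(P\|Q)}$ is jointly convex.
   Context: For $\alpha>1$, $D_\alpha(P\|Q)=\frac{1}{\alpha-1}\log\sum_x P(x)^\alpha Q(x)^{1-\alpha}$ (with $0^\alpha 0^{1-\alpha}=0$ and $u^\alpha 0^{1-\alpha}=\infty$ for $u>0$), and $D^\delta_\alpha(P\|Q)=\inf\{D_\alpha(P'\|Q'): P=(1-\delta)P'+\delta P'',\ Q=(1-\delta)Q'+\delta Q''\}$, the infimum over probability distributions $P',P'',Q',Q''$ on $U$. *)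

(* Defs.v *)
From HB Require Import structures.
From mathcomp Require Import all_boot all_order all_algebra.
From mathcomp Require Import all_classical all_reals all_analysis.
Set Implicit Arguments. Unset Strict Implicit. Unset Printing Implicit Defensive.
Import Order.TTheory GRing.Theory Num.Theory.
Local Open Scope classical_set_scope.
Local Open Scope ring_scope.

Section Renyi.
Variables (R : realType) (U : finType).

Definition is_dist (P : U -> R) : Prop :=
  (forall x, 0 <= P x) /\ \sum_(x : U) P x = 1.

Definition renyi_term (alpha : R) (u v : R) : \bar R :=
  if v == 0 then (if u == 0 then 0%E else +oo%E)
  else (u `^ alpha * v `^ (1 - alpha))%:E.

Definition renyi_sum (alpha : R) (P Q : U -> R) : \bar R :=
  (\sum_(x : U) renyi_term alpha (P x) (Q x))%E.

Definition renyiD (alpha : R) (P Q : U -> R) : \bar R :=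
  (((alpha - 1)^-1)%:E * lne (renyi_sum alpha P Q))%E.

Definition renyiD_smooth (alpha delta : R) (P Q : U -> R) : \bar R :=
  ereal_inf [set d | exists P' P'' Q' Q'' : U -> R,
    [/\ is_dist P' /\ is_dist P'' /\ is_dist Q' /\ is_dist Q'',
        (forall x, P x = (1 - delta) * P' x + delta * P'' x),
        (forall x, Q x = (1 - delta) * Q' x + delta * Q'' x)
      & d = renyiD alpha P' Q']].

Definition feasible (delta : R) (P Q P' Q' : U -> R) : Prop :=
  [/\ \sum_(x : U) P' x = 1, \sum_(x : U) Q' x = 1,
      (forall x, 0 <= P' x <= P x / (1 - delta))
    & (forall x, 0 <= Q' x <= Q x / (1 - delta))].

Definition program_value (alpha delta : R) (P Q : U -> R) : \bar R :=
  ereal_inf [set v | exists P' Q' : U -> R,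
     feasible delta P Q P' Q' /\ v = renyi_sum alpha P' Q'].

Definition mix (l : R) (f g : U -> R) : U -> R := fun x => l * f x + (1 - l) * g x.

End Renyi.

(* Main.v *)
Require Import Defs.
From HB Require Import structures.
From mathcomp Require Import all_boot all_order all_algebra.
From mathcomp Require Import all_classical all_reals all_analysis.
From mathcomp Require Import ring lra.
Import Order.TTheory GRing.Theory Num.Theory.
Local Open Scope classical_set_scope.
Local Open Scope ring_scope.

Section H.
Context {R : realType} {U : finType}.
Implicit Types (u v t a b p : R).

Lemma powR_conv p t (x y : R) : 1 <= p -> 0 <= t -> t <= 1 -> 0 <= x -> 0 <= y ->
  (t * x + (1 - t) * y) `^ p <= t * x `^ p + (1 - t) * y `^ p.
Proof.
move=> p1 t0 t1 x0 y0.
have := @convex_powR R p p1 (Itv01 t0 t1) x y.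
rewrite !inE /= !in_itv /= !andbT => /(_ x0 y0).
by rewrite !convRE /=.
Qed.

Lemma term_pos alpha u v : 0 <= u -> 0 < v -> u `^ alpha * v `^ (1 - alpha) = v * (u / v) `^ alpha.
Proof.
move=> u0 v0.
rewrite powRM //; last by rewrite invr_ge0 ltW.
rewrite -powR_inv1; last exact: ltW.
rewrite -powRrM mulN1r.
rewrite powRD; last by apply/implyP => _; rewrite gt_eqF.
by rewrite powRr1 ?ltW // mulrCA.
Qed.

Lemma term_ge0 alpha u v : (0 <= @renyi_term R alpha u v)%E.
Proof.
rewrite /renyi_term; case: ifP => _; first by case: ifP.
by rewrite lee_fin mulr_ge0 // powR_ge0.
Qed.

Lemma term_oo_rhs (a b : R) (w : \bar R) : 0 < a -> 0 <= b -> (0 <= w)%E ->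
  (a%:E * +oo + b%:E * w)%E = +oo%E.
Proof.
move=> a0 b0 w0; rewrite gt0_muley ?lte_fin // addye //.
have h : (0 <= b%:E * w)%E by apply: mule_ge0; rewrite ?lee_fin.
by move: h; case: (b%:E * w)%E.
Qed.

Lemma term_conv_pos alpha a b u1 v1 u2 v2 : 1 < alpha -> 0 < a -> 0 < b -> a + b = 1 ->
  0 <= u1 -> 0 < v1 -> 0 <= u2 -> 0 < v2 ->
  (a * u1 + b * u2) `^ alpha * (a * v1 + b * v2) `^ (1 - alpha) <=
   a * (u1 `^ alpha * v1 `^ (1 - alpha)) + b * (u2 `^ alpha * v2 `^ (1 - alpha)).
Proof.
move=> a1 a0 b0 ab u10 v10 u20 v20.
have v0 : 0 < a * v1 + b * v2 by rewrite addr_gt0 // mulr_gt0.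
rewrite !term_pos //; last by rewrite addr_ge0 // mulr_ge0 // ltW.
set v := a * v1 + b * v2.
set t := a * v1 / v.
have t1 : 1 - t = b * v2 / v by rewrite /t /v; field; rewrite gt_eqF.
have -> : (a * u1 + b * u2) / v = t * (u1 / v1) + (1 - t) * (u2 / v2).
  rewrite t1 /t /v; field; rewrite !gt_eqF //.
apply: (le_trans (y := v * (t * (u1/v1)`^alpha + (1-t)*(u2/v2)`^alpha))).
  apply: ler_wpM2l; first exact: ltW.
  apply: powR_conv; first exact: ltW.
  - by rewrite /t divr_ge0 // ?mulr_ge0 // ltW.
  - by rewrite /t ler_pdivrMr // mul1r /v lerDl mulr_ge0 // ltW.
  - by rewrite divr_ge0 // ltW.
  - by rewrite divr_ge0 // ltW.
rewrite t1 /t mulrDr.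
by apply: lerD; rewrite le_eqVlt; apply/orP; left; apply/eqP; field; rewrite gt_eqF.
Qed.

Lemma term00 alpha : @renyi_term R alpha 0 0 = 0%E.
Proof. by rewrite /renyi_term eqxx. Qed.
Lemma termu0 alpha u : u != 0 -> @renyi_term R alpha u 0 = +oo%E.
Proof. by move=> h; rewrite /renyi_term eqxx (negbTE h). Qed.
Lemma termE alpha u v : v != 0 -> @renyi_term R alpha u v = (u `^ alpha * v `^ (1 - alpha))%:E.
Proof. by move=> h; rewrite /renyi_term (negbTE h). Qed.

Lemma term_conv alpha a b u1 v1 u2 v2 : 1 < alpha -> 0 < a -> 0 < b -> a + b = 1 ->
  0 <= u1 -> 0 <= v1 -> 0 <= u2 -> 0 <= v2 ->
  (renyi_term alpha (a * u1 + b * u2) (a * v1 + b * v2) <=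
   a%:E * renyi_term alpha u1 v1 + b%:E * renyi_term alpha u2 v2)%E.
Proof.
move=> a1 a0 b0 ab u10 v10 u20 v20.
have [v1z|v1nz] := eqVneq v1 0.
- subst v1. have [u1z|u1nz] := eqVneq u1 0.
  + subst u1; rewrite !mulr0 !add0r.
    rewrite term00 mule0 add0e.
    have [v2z|v2nz] := eqVneq v2 0.
    * subst v2. have [u2z|u2nz] := eqVneq u2 0.
      -- by subst u2; rewrite !mulr0 term00 mule0.
      -- by rewrite (termu0 _ _ u2nz) gt0_muley ?lte_fin // leey.
    * have v2p : 0 < v2 by rewrite lt_neqAle eq_sym v2nz.
      rewrite !termE ?mulf_neq0 ?gt_eqF // -EFinM lee_fin.
      rewrite !term_pos ?mulr_ge0 ?mulr_gt0 //; try exact: ltW.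
      rewrite (_ : b * u2 / (b * v2) = u2 / v2); last by field; rewrite !gt_eqF.
      by rewrite mulrA.
  + rewrite (termu0 _ _ u1nz) term_oo_rhs ?leey //; last exact: term_ge0.
    exact: ltW.
- have v1p : 0 < v1 by rewrite lt_neqAle eq_sym v1nz.
  have [v2z|v2nz] := eqVneq v2 0.
  + subst v2. have [u2z|u2nz] := eqVneq u2 0.
    * subst u2; rewrite !mulr0 !addr0.
      rewrite term00 mule0 adde0.
      rewrite !termE ?mulf_neq0 ?gt_eqF // -EFinM lee_fin.
      rewrite !term_pos ?mulr_ge0 ?mulr_gt0 //; try exact: ltW.
      rewrite (_ : a * u1 / (a * v1) = u1 / v1); last by field; rewrite !gt_eqF.
      by rewrite mulrA.
    * rewrite (termu0 _ _ u2nz) addeC term_oo_rhs ?leey //; last exact: term_ge0.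
      exact: ltW.
  + have v2p : 0 < v2 by rewrite lt_neqAle eq_sym v2nz.
    have vp : 0 < a * v1 + b * v2 by rewrite addr_gt0 // mulr_gt0.
    rewrite !termE ?gt_eqF // -!EFinM -EFinD lee_fin.
    exact: term_conv_pos.
Qed.

Lemma sum_conv alpha l (P1 Q1 P2 Q2 : U -> R) : 1 < alpha -> 0 <= l <= 1 ->
  (forall x, 0 <= P1 x) -> (forall x, 0 <= Q1 x) ->
  (forall x, 0 <= P2 x) -> (forall x, 0 <= Q2 x) ->
  (renyi_sum alpha (mix l P1 P2) (mix l Q1 Q2)
     <= l%:E * renyi_sum alpha P1 Q1 + (1 - l)%:E * renyi_sum alpha P2 Q2)%E.
Proof.
move=> a1 /andP[l0 l1] hP1 hQ1 hP2 hQ2.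
have [->|lnz] := eqVneq l 0.
  have mE (f g : U -> R) : mix 0 f g = g.
    by apply/funext => x; rewrite /mix mul0r add0r subr0 mul1r.
  by rewrite !mE mul0e add0e subr0 mul1e.
have [->|lno] := eqVneq l 1.
  have mE (f g : U -> R) : mix 1 f g = f.
    by apply/funext => x; rewrite /mix mul1r subrr mul0r addr0.
  by rewrite !mE mul1e subrr mul0e adde0.
have lp : 0 < l by rewrite lt_neqAle eq_sym lnz.
have lq : 0 < 1 - l by rewrite subr_gt0 lt_neqAle lno.
rewrite /renyi_sum !ge0_sume_distrr; try by move=> *; exact: term_ge0.
rewrite -big_split /=; apply: lee_sum => x _.
by apply: term_conv => //; rewrite addrC subrK.
Qed.

Lemma sum_mix l (f g : U -> R) :
  \sum_(x : U) mix l f g x = l * \sum_(x : U) f x + (1 - l) * \sum_(x : U) g x.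
Proof. by rewrite /mix big_split /= -!mulr_sumr. Qed.

Lemma mix_ge0 l (f g : U -> R) x : 0 <= l <= 1 -> 0 <= f x -> 0 <= g x -> 0 <= mix l f g x.
Proof.
move=> /andP[l0 l1] f0 g0; rewrite /mix addr_ge0 // mulr_ge0 //.
by rewrite subr_ge0.
Qed.

Lemma mix_dist l (P1 P2 : U -> R) : 0 <= l <= 1 -> is_dist P1 -> is_dist P2 ->
  is_dist (mix l P1 P2).
Proof.
move=> hl [h1 s1] [h2 s2]; split; first by move=> x; apply: mix_ge0.
by rewrite sum_mix s1 s2 !mulr1 addrC subrK.
Qed.

Lemma mix_feasible delta l (P1 Q1 P1' Q1' P2 Q2 P2' Q2' : U -> R) :
  0 <= delta < 1 -> 0 <= l <= 1 ->
  feasible delta P1 Q1 P1' Q1' -> feasible delta P2 Q2 P2' Q2' ->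
  feasible delta (mix l P1 P2) (mix l Q1 Q2) (mix l P1' P2') (mix l Q1' Q2').
Proof.
move=> /andP[d0 d1] hl [s1 t1 b1 c1] [s2 t2 b2 c2].
have hl' := hl; move: hl' => /andP[l0 l1].
have l1' : 0 <= 1 - l by rewrite subr_ge0.
have key (f g f' g' : U -> R) x : 0 <= f' x <= f x / (1 - delta) ->
    0 <= g' x <= g x / (1 - delta) ->
    0 <= mix l f' g' x <= mix l f g x / (1 - delta).
  move=> /andP[a1 a2] /andP[b1' b2']; rewrite mix_ge0 //=.
  by rewrite /mix [in X in _ <= X]mulrDl -!mulrA lerD // ler_wpM2l.
split.
- by rewrite sum_mix s2 s1 !mulr1 addrC subrK.
- by rewrite sum_mix t2 t1 !mulr1 addrC subrK.
- by move=> x; apply: key.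
- by move=> x; apply: key.
Qed.

Lemma decomp delta (P P' : U -> R) : 0 <= delta < 1 -> is_dist P ->
  (exists P'', is_dist P' /\ is_dist P'' /\
      forall x, P x = (1 - delta) * P' x + delta * P'' x) <->
  (\sum_(x : U) P' x = 1 /\ forall x, 0 <= P' x <= P x / (1 - delta)).
Proof.
move=> /andP[d0 d1] [P0 Ps].
have dp : 0 < 1 - delta by rewrite subr_gt0.
split.
- move=> [P'' [[h1 s1] [[h2 s2] e]]]; split => // x.
  rewrite h1 /= ler_pdivlMr // e mulrC lerDl mulr_ge0 //.
- move=> [s1 b]; have P'0 x : 0 <= P' x by case/andP: (b x).
  have le x : (1 - delta) * P' x <= P x.
    by case/andP: (b x) => _; rewrite ler_pdivlMr // mulrC.
  have [dz|dnz] := eqVneq delta 0.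
  + subst delta; exists P; split => //; split => //.
    have hd x : 0 <= P x - P' x by rewrite subr_ge0 -[P' x]mul1r -[1]subr0.
    have sd : \sum_(x : U) (P x - P' x) = 0 by rewrite sumrB Ps s1 subrr.
    move=> x; have := psumr_eq0P (fun i _ => hd i) sd.
    by move=> h; have := h x isT; move/eqP; rewrite subr_eq0 => /eqP ->; rewrite subr0 mul1r mul0r addr0.
  + have dpos : 0 < delta by rewrite lt_neqAle eq_sym dnz.
    exists (fun x => (P x - (1 - delta) * P' x) / delta); split => //; split.
    * split; first by move=> x; rewrite divr_ge0 // subr_ge0.
      rewrite -mulr_suml sumrB -mulr_sumr Ps s1 mulr1.
      by rewrite opprB addrC subrK mulfV // gt_eqF.
    * by move=> x; field; rewrite gt_eqF.
Qed.
Lemma inf_image (c : R) (B : set (\bar R)) : 0 < c -> (forall s, B s -> 0 <= s)%E ->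
  expeR (c%:E * ereal_inf ((fun s => ((c^-1)%:E * lne s)%E) @` B))%E = ereal_inf B.
Proof.
move=> c0 B0.
set f := fun s => ((c^-1)%:E * lne s)%E.
set g := fun y => expeR (c%:E * y)%E.
have itv (s : \bar R) : (0 <= s)%E -> s \in `[0%E, +oo%E].
  by move=> s0; rewrite in_itv /= s0 leey.
have gf s : (0 <= s)%E -> g (f s) = s.
  move=> s0; rewrite /g /f muleA -EFinM mulfV ?gt_eqF // mul1e.
  by rewrite lneK // itv.
have fm (s t : \bar R) : (0 <= s)%E -> (0 <= t)%E -> (s <= t)%E -> (f s <= f t)%E.
  move=> s0 t0 st; rewrite /f lee_pmul2l // ?lte_fin ?invr_gt0 //.
  by rewrite lee_lne // itv.
have gm y z : (y <= z)%E -> (g y <= g z)%E.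
  by move=> yz; rewrite /g lee_expeR lee_pmul2l // lte_fin.
have m0 : (0 <= ereal_inf B)%E by apply: le_ereal_inf_tmp => s /B0.
rewrite -/(g _); apply/le_anti/andP; split.
- apply: le_ereal_inf_tmp => s Bs.
  rewrite -(gf s (B0 _ Bs)); apply: gm; apply: ereal_inf_lbound; exists s => //.
- rewrite -{1}(gf _ m0); apply: gm; apply: le_ereal_inf_tmp => _ [s Bs <-].
  apply: fm => //; first exact: B0.
  exact: ereal_inf_lbound.
Qed.
Lemma inf_mul_le (k : R) (S : set (\bar R)) (c a : \bar R) : 0 < k ->
  (forall s, S s -> 0 <= s)%E -> (0 <= c)%E ->
  (forall s, S s -> a <= k%:E * s + c)%E -> (a <= k%:E * ereal_inf S + c)%E.
Proof.
move=> k0 S0 c0 h.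
have i0 : (0 <= ereal_inf S)%E by apply: le_ereal_inf_tmp => s /S0.
have ki0 : (0 <= k%:E * ereal_inf S)%E by apply: mule_ge0 => //; rewrite lee_fin ltW.
case: c c0 h => [r| |] // c0 h; last first.
  by rewrite addey ?leey //; move: ki0; case: (k%:E * _)%E.
case: a h => [a| |] h; last exact: leNye.
- have lb : (((a - r) / k)%:E <= ereal_inf S)%E.
    apply: le_ereal_inf_tmp => s Ss; have := h s Ss; have := S0 s Ss.
    case: s Ss => [x| |] // _ _; last by rewrite leey.
    rewrite -EFinM -EFinD !lee_fin => ax.
    by rewrite ler_pdivrMr // mulrC; lra.
  move: lb i0; case: (ereal_inf S) => [y| |] //; last by move=> _ _; rewrite gt0_muley ?lte_fin // addye // leey.
  move=> + _; rewrite -EFinM -EFinD !lee_fin ler_pdivrMr // => ?.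
  by rewrite mulrC; lra.
- have -> : ereal_inf S = +oo%E.
    apply/ereal_inf_pinfty => s Ss; have := h s Ss; have := S0 s Ss.
    by case: s Ss => [x| |] //; rewrite -EFinM -EFinD.
  by rewrite gt0_muley ?lte_fin // addye // leey.
Qed.

Lemma renyi_sum_ge0 alpha (P Q : U -> R) : (0 <= renyi_sum alpha P Q)%E.
Proof. by apply: sume_ge0 => x _; exact: term_ge0. Qed.

Lemma part1 alpha delta (P Q : U -> R) : 1 < alpha -> 0 <= delta < 1 ->
  is_dist P -> is_dist Q ->
  expeR ((alpha - 1)%:E * renyiD_smooth alpha delta P Q)%E
    = program_value alpha delta P Q.
Proof.
move=> a1 hd dP dQ.
rewrite /renyiD_smooth /program_value.
set B := [set v | exists P' Q' : U -> R, feasible delta P Q P' Q' /\ v = renyi_sum alpha P' Q'].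
have -> : [set d | exists P' P'' Q' Q'' : U -> R,
    [/\ is_dist P' /\ is_dist P'' /\ is_dist Q' /\ is_dist Q'',
        (forall x, P x = (1 - delta) * P' x + delta * P'' x),
        (forall x, Q x = (1 - delta) * Q' x + delta * Q'' x)
      & d = renyiD alpha P' Q']] =
   (fun s => (((alpha - 1)^-1)%:E * lne s)%E) @` B.
  apply/seteqP; split => d.
  - move=> [P' [P'' [Q' [Q'' [[dP' [dP'' [dQ' dQ'']]] eP eQ ->]]]]].
    exists (renyi_sum alpha P' Q'); last by [].
    have [s1 b1] := (decomp _ _ P' hd dP).1 (ex_intro _ P'' (conj dP' (conj dP'' eP))).
    have [t1 c1] := (decomp _ _ Q' hd dQ).1 (ex_intro _ Q'' (conj dQ' (conj dQ'' eQ))).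
    by exists P', Q'; split.
  - move=> [s [P' [Q' [[s1 t1 b1 c1] ->]]] <-].
    have [P'' [dP' [dP'' eP]]] := (decomp _ _ P' hd dP).2 (conj s1 b1).
    have [Q'' [dQ' [dQ'' eQ]]] := (decomp _ _ Q' hd dQ).2 (conj t1 c1).
    by exists P', P'', Q', Q''; split.
apply: inf_image; first by rewrite subr_gt0.
by move=> s [P' [Q' [_ ->]]]; exact: renyi_sum_ge0.
Qed.
End H.

Theorem mainTheorem8 (R : realType) (U : finType) (alpha delta : R) :
  1 < alpha -> 0 <= delta < 1 ->
  (* (1) exp((alpha-1) D^delta_alpha) is the optimal value of the program *)
  (forall P Q : U -> R, is_dist P -> is_dist Q ->
     expeR ((alpha - 1)%:E * renyiD_smooth alpha delta P Q)%E
       = program_value alpha delta P Q)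
  (* (2a) the feasible set is convex jointly in (P, Q, P', Q') *)
  /\ (forall (P1 Q1 P1' Q1' P2 Q2 P2' Q2' : U -> R) (l : R),
        0 <= l <= 1 ->
        is_dist P1 -> is_dist Q1 -> feasible delta P1 Q1 P1' Q1' ->
        is_dist P2 -> is_dist Q2 -> feasible delta P2 Q2 P2' Q2' ->
        is_dist (mix l P1 P2) /\ is_dist (mix l Q1 Q2) /\
        feasible delta (mix l P1 P2) (mix l Q1 Q2) (mix l P1' P2') (mix l Q1' Q2'))
  (* (2b) the objective is jointly convex *)
  /\ (forall (P1 Q1 P1' Q1' P2 Q2 P2' Q2' : U -> R) (l : R),
        0 <= l <= 1 ->
        is_dist P1 -> is_dist Q1 -> feasible delta P1 Q1 P1' Q1' ->
        is_dist P2 -> is_dist Q2 -> feasible delta P2 Q2 P2' Q2' ->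
        (renyi_sum alpha (mix l P1' P2') (mix l Q1' Q2')
          <= l%:E * renyi_sum alpha P1' Q1' + (1 - l)%:E * renyi_sum alpha P2' Q2')%E)
  (* (3) joint convexity of (P, Q) |-> exp((alpha-1) D^delta_alpha(P||Q)) *)
  /\ (forall (P1 Q1 P2 Q2 : U -> R) (l : R),
        0 <= l <= 1 ->
        is_dist P1 -> is_dist Q1 -> is_dist P2 -> is_dist Q2 ->
        (expeR ((alpha - 1)%:E * renyiD_smooth alpha delta (mix l P1 P2) (mix l Q1 Q2))
          <= l%:E * expeR ((alpha - 1)%:E * renyiD_smooth alpha delta P1 Q1)
             + (1 - l)%:E * expeR ((alpha - 1)%:E * renyiD_smooth alpha delta P2 Q2))%E).
Proof.
move=> a1 hd.
have p1 := fun P Q => @part1 R U alpha delta P Q a1 hd.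
have feas0 (P Q P' Q' : U -> R) : feasible delta P Q P' Q' ->
    (forall x, 0 <= P' x) /\ (forall x, 0 <= Q' x).
  by case=> _ _ b c; split => x; [case/andP: (b x)|case/andP: (c x)].
have conv2 (P1 Q1 P1' Q1' P2 Q2 P2' Q2' : U -> R) (l : R) :
    0 <= l <= 1 -> feasible delta P1 Q1 P1' Q1' -> feasible delta P2 Q2 P2' Q2' ->
    (renyi_sum alpha (mix l P1' P2') (mix l Q1' Q2')
      <= l%:E * renyi_sum alpha P1' Q1' + (1 - l)%:E * renyi_sum alpha P2' Q2')%E.
  move=> hl f1 f2; have [h1 h2] := feas0 _ _ _ _ f1; have [h3 h4] := feas0 _ _ _ _ f2.
  exact: sum_conv.
split; first exact: p1.
split.
  move=> P1 Q1 P1' Q1' P2 Q2 P2' Q2' l hl dP1 dQ1 f1 dP2 dQ2 f2.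
  split; first exact: mix_dist.
  split; first exact: mix_dist.
  exact: mix_feasible.
split.
  move=> P1 Q1 P1' Q1' P2 Q2 P2' Q2' l hl _ _ f1 _ _ f2; exact: conv2 f1 f2.
move=> P1 Q1 P2 Q2 l hl dP1 dQ1 dP2 dQ2.
have [->|lnz] := eqVneq l 0.
  have mE (f g : U -> R) : mix 0 f g = g.
    by apply/funext => x; rewrite /mix mul0r add0r subr0 mul1r.
  by rewrite !mE mul0e add0e subr0 mul1e.
have [->|lno] := eqVneq l 1.
  have mE (f g : U -> R) : mix 1 f g = f.
    by apply/funext => x; rewrite /mix mul1r subrr mul0r addr0.
  by rewrite !mE mul1e subrr mul0e adde0.
have /andP[l0 l1] := hl.
have lp : 0 < l by rewrite lt_neqAle eq_sym lnz.
have lq : 0 < 1 - l by rewrite subr_gt0 lt_neqAle lno.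
rewrite !p1 //; try exact: mix_dist.
rewrite /program_value.
set B1 := [set v | exists P' Q' : U -> R, feasible delta P1 Q1 P' Q' /\ v = renyi_sum alpha P' Q'].
set B2 := [set v | exists P' Q' : U -> R, feasible delta P2 Q2 P' Q' /\ v = renyi_sum alpha P' Q'].
have B0 (P Q : U -> R) s :
    [set v | exists P' Q' : U -> R, feasible delta P Q P' Q' /\ v = renyi_sum alpha P' Q'] s ->
    (0 <= s)%E.
  by move=> [P' [Q' [_ ->]]]; exact: renyi_sum_ge0.
have i2 : (0 <= ereal_inf B2)%E by apply: le_ereal_inf_tmp => s /B0.
apply: inf_mul_le => //; first exact: B0.
  by apply: mule_ge0 => //; rewrite lee_fin ltW.
move=> s1 Bs1; rewrite addeC; apply: inf_mul_le => //; first exact: B0.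
  by apply: mule_ge0; [rewrite lee_fin ltW | exact: B0 Bs1].
move=> s2 Bs2; rewrite addeC.
move: Bs1 Bs2 => [P1' [Q1' [f1 ->]]] [P2' [Q2' [f2 ->]]].
apply: le_trans (conv2 _ _ _ _ _ _ _ _ _ hl f1 f2).
apply: ereal_inf_lbound; exists (mix l P1' P2'), (mix l Q1' Q2'); split => //.
exact: mix_feasible.
Qed.
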